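(* Define $\mathrm{Mex}(F)=\min(\mathbb{N}_0\setminus F)$ for $F\subseteq\mathbb{N}_0$, and $a+D=\{a+d:d\in D\}$. Define triples $v(n)=(v_1(n),v_2(n),v_3(n))$, $n\ge 0$, recursively by $v(0)=(0,0,0)$ and, for $n\ge 0$, with $F_n=\{v_i(k): 0\le k\le n,\ i\in\{1,2,3\}\}$ and $D_n=\bigcup_{k=0}^{n}\{v_2(k)-v_1(k),\,v_3(k)-v_2(k),\,v_3(k)-v_1(k)\}$, \[ v_1(n+1)=\mathrm{Mex}(F_n),\quad v_2(n+1)=\mathrm{Mex}\big((v_1(n+1)+D_n)\cup\{1,\dots,v_1(n+1)\}\cup F_n\big), \] \[ v_3(n+1)=\mathrm{Mex}\big((v_2(n+1)+D_n)\cup\{1,\dots,v_2(n+1)\}\cup F_n\big). \] For a finite set $K=\{k_1<k_2<\dots<k_\ell\}\subseteq\mathbb{N}_0$ let $\mathrm{Gap}(K)=\min\{k_{i+1}-k_i: 1\le i\le \ell-1\}$ if $\ell\ge 2$ and $\mathrm{Gap}(K)=\infty$ if $\ell\le 1$. Then for every $n\ge 1$: (a) $v_i(n)-v_i(n-1)\ge i$ for $i=1,2,3$; (b) $v_3(n)-v_1(n)\ge v_3(n-1)-v_1(n-1)+2$; (c) $\mathrm{Gap}(D_{n-1}\cap[\mathrm{Mex}(D_{n-1}),\infty))\ge 2$; (d) $\mathrm{Gap}(F_{n-1}\cap[\mathrm{Mex}(F_{n-1})+\mathrm{Mex}(D_{n-1}),\infty))\ge 3$; (e) $\max F_n=v_3(n)=v_2(n)+\mathrm{Mex}(D_{n-1})$;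 (f) $\max D_n=v_3(n)-v_1(n)$.
   Context: $\mathbb{N}_0$ denotes the nonnegative integers. The triples $v(n)$ are the (sorted) P-positions of the 3D Wythoff $L^1$-Nim game. *)

(* Defs.v *)
From mathcomp Require Import all_boot.
Set Implicit Arguments. Unset Strict Implicit. Unset Printing Implicit Defensive.

Lemma mex_ex (s : seq nat) : exists n, n \notin s.
Proof.
exists (sumn s).+1; apply/negP => Hs.
have : forall x, x \in s -> x <= sumn s.
  elim: s {Hs} => [//|y t IH] x; rewrite inE => /orP [/eqP ->|/IH Hx] /=.
    exact: leq_addr.
  exact: (leq_trans Hx (leq_addl _ _)).
by move=> /(_ _ Hs); rewrite ltnn.
Qed.

Definition mex (s : seq nat) : nat := ex_minn (mex_ex s).

Definition triple := (nat * nat * nat)%type.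
Definition t1 (t : triple) := t.1.1.
Definition t2 (t : triple) := t.1.2.
Definition t3 (t : triple) := t.2.

(* F and D computed from a list of triples [v(0); ...; v(n)] *)
Definition F_of (l : seq triple) : seq nat :=
  flatten [seq [:: t1 t; t2 t; t3 t] | t <- l].
Definition D_of (l : seq triple) : seq nat :=
  flatten [seq [:: t2 t - t1 t; t3 t - t2 t; t3 t - t1 t] | t <- l].

Definition shift (a : nat) (s : seq nat) : seq nat := [seq a + d | d <- s].

Definition next_triple (l : seq triple) : triple :=
  let F := F_of l in
  let D := D_of l in
  let a := mex F in
  let b := mex (shift a D ++ iota 1 a ++ F) in
  let c := mex (shift b D ++ iota 1 b ++ F) in
  (a, b, c).

Fixpoint vlist (n : nat) : seq triple :=
  match n with
  | 0 => [:: (0, 0, 0)]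
  | m.+1 => rcons (vlist m) (next_triple (vlist m))
  end.

Definition v (n : nat) : triple := last (0, 0, 0) (vlist n).
Definition v1 n := t1 (v n).
Definition v2 n := t2 (v n).
Definition v3 n := t3 (v n).

Definition F (n : nat) : seq nat :=
  flatten [seq [:: v1 k; v2 k; v3 k] | k <- iota 0 n.+1].
Definition D (n : nat) : seq nat :=
  flatten [seq [:: v2 k - v1 k; v3 k - v2 k; v3 k - v1 k] | k <- iota 0 n.+1].

(* Gap(K): None encodes infinity (|K| <= 1); otherwise the minimum of the
   consecutive differences of the increasing enumeration of K. *)
Definition Gap (K : seq nat) : option nat :=
  let s := sort leq (undup K) in
  match s with
  | [::] | [:: _] => None
  | x :: t =>
      let ds := [seq p.2 - p.1 | p <- zip s t] in
      Some (foldr minn (head 0 ds) ds)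
  end.

Definition gap_ge (K : seq nat) (c : nat) : bool :=
  if Gap K is Some g then c <= g else true.

Definition from (a : nat) (K : seq nat) : seq nat := [seq x <- K | a <= x].

Definition maxs (s : seq nat) : nat := \max_(x <- s) x.

(* Main.v *)
Require Import Defs.
From mathcomp Require Import all_boot.
From mathcomp Require Import zify.

Lemma mex_notin s : mex s \notin s.
Proof. by rewrite /mex; case: ex_minnP. Qed.

Lemma mex_min s x : x < mex s -> x \in s.
Proof.
rewrite /mex; case: ex_minnP => m Hm Hmin Hx.
apply/negPn/negP => H; have := Hmin _ H; by rewrite leqNgt Hx.
Qed.

Lemma mex_le s x : x \notin s -> mex s <= x.
Proof. by rewrite /mex; case: ex_minnP => m _ Hmin /Hmin. Qed.

Lemma mex_ge s x : (forall y, y < x -> y \in s) -> x <= mex s.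
Proof.
move=> H; rewrite leqNgt; apply/negP => /H; by rewrite (negbTE (mex_notin s)).
Qed.

Lemma mex_eq s x : x \notin s -> (forall y, y < x -> y \in s) -> mex s = x.
Proof. move=> H1 H2; apply/eqP; by rewrite eqn_leq mex_le // mex_ge. Qed.

Lemma mex_mono s s' : {subset s <= s'} -> mex s <= mex s'.
Proof. move=> H; apply: mex_ge => y /mex_min /H //. Qed.

Lemma mem_shift a s x : (x \in shift a s) = (a <= x) && (x - a \in s).
Proof.
apply/mapP/andP => [[d Hd ->]|[H1 H2]].
  by rewrite leq_addr addKn.
by exists (x - a) => //; rewrite subnKC.
Qed.

Lemma maxs_ge s x : x \in s -> x <= maxs s.
Proof. move=> H; rewrite /maxs; exact: (@leq_bigmax_seq _ _ xpredT (fun x => x) x H). Qed.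

Lemma maxs_le s M : (forall x, x \in s -> x <= M) -> maxs s <= M.
Proof. move=> H; apply/bigmax_leqP_seq => i Hi _; exact: H. Qed.

Definition gapP (K : seq nat) (g : nat) :=
  forall x y, x \in K -> y \in K -> x < y -> x + g <= y.

Lemma foldr_minn_ge g x0 ds : g <= x0 -> all (fun d => g <= d) ds ->
  g <= foldr minn x0 ds.
Proof.
elim: ds => [//|d ds IH] /= H0 /andP [Hd Hds].
by rewrite leq_min Hd IH.
Qed.

Lemma zip_gaps K g : gapP K g -> forall t x, path ltn x t -> {subset x :: t <= K} ->
  all (fun d => g <= d) [seq p.2 - p.1 | p <- zip (x :: t) t].
Proof.
move=> HK; elim => [//|y t IH] x /= /andP [Hxy Hp] Hsub.
apply/andP; split.
  have := HK x y (Hsub x (mem_head _ _)) (Hsub y _) Hxy.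
  rewrite inE mem_head orbT => /(_ isT); lia.
apply: IH => // z Hz; apply: Hsub; by rewrite inE Hz orbT.
Qed.

Lemma gapP_ge K g : gapP K g -> gap_ge K g.
Proof.
move=> HK; rewrite /gap_ge /Gap.
have Hs : sorted ltn (sort leq (undup K)).
  by rewrite ltn_sorted_uniq_leq sort_uniq undup_uniq sort_sorted //; exact: leq_total.
have Hm : {subset sort leq (undup K) <= K}.
  by move=> z; rewrite mem_sort mem_undup.
move: Hs Hm; case: (sort leq (undup K)) => [|x [|y t]] //= Hs Hm.
have := @zip_gaps K g HK (y :: t) x Hs Hm => /= /andP [H1 H2].
by rewrite leq_min H1; apply: foldr_minn_ge.
Qed.

Lemma vlist_map n : vlist n = [seq v k | k <- iota 0 n.+1].
Proof.
elim: n => [//|n IH].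
have -> : n.+2 = n.+1 + 1 by rewrite addn1.
rewrite iotaD map_cat -IH /= cats1 /v /=.
by rewrite last_rcons.
Qed.

Lemma vS n : v n.+1 = next_triple (vlist n).
Proof. by rewrite /v /= last_rcons. Qed.

Lemma F_ofE n : F_of (vlist n) = F n.
Proof. by rewrite vlist_map /F_of -map_comp. Qed.

Lemma D_ofE n : D_of (vlist n) = D n.
Proof. by rewrite vlist_map /D_of -map_comp. Qed.

Lemma v1S n : v1 n.+1 = mex (F n).
Proof. by rewrite /v1 vS /next_triple /t1 /= F_ofE. Qed.

Lemma v2S n : v2 n.+1 = mex (shift (v1 n.+1) (D n) ++ iota 1 (v1 n.+1) ++ F n).
Proof. by rewrite v1S /v2 vS /next_triple /t2 /= F_ofE D_ofE. Qed.

Lemma v3S n : v3 n.+1 = mex (shift (v2 n.+1) (D n) ++ iota 1 (v2 n.+1) ++ F n).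
Proof. by rewrite v2S v1S /v3 vS /next_triple /t3 /= F_ofE D_ofE. Qed.

Lemma FS n : F n.+1 = F n ++ [:: v1 n.+1; v2 n.+1; v3 n.+1].
Proof.
rewrite /F.
have -> : n.+2 = n.+1 + 1 by rewrite addn1.
by rewrite iotaD map_cat flatten_cat /= ?cats0.
Qed.

Lemma DS n : D n.+1 = D n ++ [:: v2 n.+1 - v1 n.+1; v3 n.+1 - v2 n.+1; v3 n.+1 - v1 n.+1].
Proof.
rewrite /D.
have -> : n.+2 = n.+1 + 1 by rewrite addn1.
by rewrite iotaD map_cat flatten_cat /= ?cats0.
Qed.

Lemma v0 : v 0 = (0, 0, 0).
Proof. by []. Qed.

Lemma F0 n : 0 \in F n.
Proof. elim: n => [//|n IH]; by rewrite FS mem_cat IH. Qed.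

Lemma D0 n : 0 \in D n.
Proof. elim: n => [//|n IH]; by rewrite DS mem_cat IH. Qed.

Lemma mem_from a K x : (x \in from a K) = (a <= x) && (x \in K).
Proof. by rewrite mem_filter. Qed.

Lemma inSg X s t x : (x \in shift X s ++ iota 1 X ++ t) =
  ((X <= x) && (x - X \in s)) || ((1 <= x < 1 + X) || (x \in t)).
Proof. by rewrite !mem_cat mem_shift mem_iota. Qed.

Lemma notinSg X s t x : X < x -> x - X \notin s -> x \notin t ->
  x \notin shift X s ++ iota 1 X ++ t.
Proof.
move=> h1 h2 h3; rewrite inSg (negbTE h2) (negbTE h3) andbF /= orbF.
apply/negP => /andP [_]; lia.
Qed.

Lemma inSg_ge X s t y : 0 \in t -> (forall d, d < mex s -> d \in s) ->
  y < X + mex s -> y \in shift X s ++ iota 1 X ++ t.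
Proof.
move=> h0 hs hy; rewrite inSg.
have [->|y0] := posnP y; first by rewrite h0 !orbT.
case: (leqP y X) => yX.
  by apply/orP; right; apply/orP; left; rewrite /=; lia.
apply/orP; left; rewrite (ltnW yX) hs //=; lia.
Qed.

Definition Inv n :=
  gapP (from (mex (D n)) (D n)) 2 /\ gapP (from (mex (F n) + mex (D n)) (F n)) 3 /\
  maxs (F n) = v3 n /\ maxs (D n) = v3 n - v1 n /\
  v2 n - v1 n < mex (D n) /\ v1 n <= v2 n <= v3 n /\ v3 n - v2 n <= v2 n - v1 n /\
  v1 n < mex (F n).

Lemma Inv0 : Inv 0.
Proof.
have mF : mex (F 0) = 1.
  by apply: mex_eq => // y; rewrite ltnS leqn0 => /eqP ->.
have mD : mex (D 0) = 1.
  by apply: mex_eq => // y; rewrite ltnS leqn0 => /eqP ->.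
rewrite /Inv mF ?mD.
have F0e : F 0 = [:: 0; 0; 0] by [].
have D0e : D 0 = [:: 0; 0; 0] by [].
rewrite F0e D0e.
have Hm : forall s, maxs s = \max_(x <- s) x by [].
split; first by move=> x y; rewrite mem_from /= !inE => /andP [h /or3P [] /eqP E]; lia.
split; first by move=> x y; rewrite mem_from /= !inE => /andP [h /or3P [] /eqP E]; lia.
split; first by rewrite /maxs /F /= !big_cons big_nil.
split; first by rewrite /maxs /D /= !big_cons big_nil.
by [].
Qed.

Lemma step n : Inv n ->
  Inv n.+1 /\ v1 n + 1 <= v1 n.+1 /\ v2 n + 2 <= v2 n.+1 /\ v3 n + 3 <= v3 n.+1 /\
  v3 n - v1 n + 2 <= v3 n.+1 - v1 n.+1 /\ v3 n.+1 = v2 n.+1 + mex (D n).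
Proof.
move=> [gD [gF [mF [mD [h5 [h6 [h7 h8]]]]]]].
have HA := v1S n; have HB := v2S n; have HC := v3S n.
have EF := FS n; have ED := DS n.
set A := v1 n.+1 in HA HB HC EF ED *.
set B := v2 n.+1 in HB HC EF ED *.
set C := v3 n.+1 in HC EF ED *.
set m := mex (D n) in gD gF h5 *.
set a := v1 n in mD h5 h6 h7 h8 *.
set b := v2 n in h5 h6 h7 *.
set c := v3 n in mF mD h6 h7 *.
have m1 : 1 <= m by apply: mex_ge => y; rewrite ltnS leqn0 => /eqP ->; exact: D0.
have mnD : m \notin D n := mex_notin _.
have ltm : forall y, y < m -> y \in D n := fun y => @mex_min _ y.
have AF : A \notin F n by rewrite HA mex_notin.
have ltA : forall y, y < A -> y \in F n by move=> y; rewrite HA; exact: mex_min.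
have Fle : forall x, x \in F n -> x <= c by move=> x /maxs_ge; rewrite mF.
have Dle : forall x, x \in D n -> x <= c - a by move=> x /maxs_ge; rewrite mD.
rewrite -HA in gF h8.
have gF' : forall x y, x \in F n -> y \in F n -> A + m <= x -> x < y -> x + 3 <= y.
  move=> x y hx hy h1 h2; apply: gF => //; rewrite mem_from ?hx ?hy ?h1 //.
  by rewrite (leq_trans h1 (ltnW h2)).
have gD' : forall x y, x \in D n -> y \in D n -> m <= x -> x < y -> x + 2 <= y.
  move=> x y hx hy h1 h2; apply: gD => //; rewrite mem_from ?hx ?hy ?h1 //.
  by rewrite (leq_trans h1 (ltnW h2)).
have B1 : A + m <= B by rewrite HB; apply: mex_ge => y; apply: inSg_ge => //; exact: F0.
have B2 : B <= A + m + 2.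
  rewrite HB; case: (boolP (A + m \in F n)) => HAm.
    have nF1 : A + m + 1 \notin F n.
      by apply/negP => H; have := gF' _ _ HAm H (leqnn _); lia.
    have nF2 : A + m + 2 \notin F n.
      by apply/negP => H; have := gF' _ _ HAm H (leqnn _); lia.
    case: (boolP (m.+1 \in D n)) => Hm1.
      have nD2 : m.+2 \notin D n.
        by apply/negP => H; have := gD' _ _ Hm1 H (leqnSn _); lia.
      apply: mex_le; apply: notinSg => //; first lia.
      by have -> : A + m + 2 - A = m.+2 by lia.
    apply: (leq_trans (mex_le _ (A + m + 1) _)); last lia.
    apply: notinSg => //; first lia.
    by have -> : A + m + 1 - A = m.+1 by lia.
  apply: (leq_trans (mex_le _ (A + m) _)); last lia.
  apply: notinSg => //; first lia.
  by rewrite addKn.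
have B3 : forall y, m < y -> y < B - A -> y \in D n.
  move=> y hy1 hy2.
  have : A + y \in shift A (D n) ++ iota 1 A ++ F n by apply: mex_min; rewrite -HB; lia.
  rewrite inSg addKn => /orP [/andP [_ //]|/orP [/andP [H1 H2]|H]]; first lia.
  have : A + m \in shift A (D n) ++ iota 1 A ++ F n by apply: mex_min; rewrite -HB; lia.
  rewrite inSg addKn (negbTE mnD) andbF /= => /orP [/andP [H1 H2]|H']; first lia.
  have := gF' _ _ H' H (leqnn _); lia.
have Cm : C = B + m.
  rewrite HC; apply: mex_eq.
    apply: notinSg; [lia| by rewrite addKn|].
    apply/negP => /Fle; lia.
  by move=> y; apply: inSg_ge => //; exact: F0.
rewrite Cm in ED EF *.
set m' := mex (D n.+1).
set A' := mex (F n.+1).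
have memD : forall x, (x \in D n.+1) = (x \in D n) || [|| x == B - A, x == B + m - B | x == B + m - A].
  by move=> x; rewrite ED mem_cat mem_seq3.
have memF : forall x, (x \in F n.+1) = (x \in F n) || [|| x == A, x == B | x == B + m].
  by move=> x; rewrite EF mem_cat mem_seq3.
have Hm' : B - A < m'.
  rewrite /m'; apply: mex_ge => y hy; rewrite memD.
  case: (ltngtP y m) => [h|h|->]; first by rewrite ltm.
    case: (ltngtP y (B - A)) => [h'|h'|->]; [by rewrite B3 | lia | by rewrite !orbT].
  by rewrite ?addKn ?eqxx !orbT.
have mm' : m <= m' by rewrite /m' ED; apply: mex_mono => z hz; rewrite mem_cat hz.
have HA' : A < A'.
  rewrite /A'; apply: mex_ge => y; rewrite ltnS leq_eqVlt => /orP [/eqP ->|/ltA h].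
    by rewrite memF eqxx !orbT.
  by rewrite memF h.
split; last by do 4 (split; first lia); lia.
rewrite /Inv -/A -/B -/C Cm -/m' -/A'.
split.
  move=> x y; rewrite -/m' !mem_from !memD => /andP [hx Hx] /andP [hy Hy] hxy.
  case/or4P: Hx => [Hx|/eqP Ex|/eqP Ex|/eqP Ex];
  case/or4P: Hy => [Hy|/eqP Ey|/eqP Ey|/eqP Ey]; first (by apply: gD' => //; lia);
  try (have ? := Dle _ Hx); try (have ? := Dle _ Hy); lia.
split.
  move=> x y; rewrite -/m' -/A' !mem_from !memF => /andP [hx Hx] /andP [hy Hy] hxy.
  case/or4P: Hx => [Hx|/eqP Ex|/eqP Ex|/eqP Ex];
  case/or4P: Hy => [Hy|/eqP Ey|/eqP Ey|/eqP Ey]; first (by apply: gF' => //; lia);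
  try (have ? := Fle _ Hx); try (have ? := Fle _ Hy); lia.
split.
  apply/eqP; rewrite eqn_leq maxs_ge ?memF ?eqxx ?orbT // andbT.
  apply: maxs_le => x; rewrite memF => /or4P [Hx|/eqP Ex|/eqP Ex|/eqP Ex];
  try (have ? := Fle _ Hx); lia.
split.
  apply/eqP; rewrite eqn_leq maxs_ge ?memD ?eqxx ?orbT // andbT.
  apply: maxs_le => x; rewrite memD => /or4P [Hx|/eqP Ex|/eqP Ex|/eqP Ex];
  try (have ? := Dle _ Hx); lia.
rewrite -/m' -/A'.
do 3 (split; first lia).
lia.
Qed.

Lemma Inv_all n : Inv n.
Proof. elim: n => [|n IH]; [exact: Inv0 | by case: (step _ IH)]. Qed.

Theorem theorem3 (n : nat) : 1 <= n ->
  (* (a) *) (v1 n.-1 + 1 <= v1 n /\ v2 n.-1 + 2 <= v2 n /\ v3 n.-1 + 3 <= v3 n) /\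
  (* (b) *) v3 n.-1 - v1 n.-1 + 2 <= v3 n - v1 n /\
  (* (c) *) gap_ge (from (mex (D n.-1)) (D n.-1)) 2 /\
  (* (d) *) gap_ge (from (mex (F n.-1) + mex (D n.-1)) (F n.-1)) 3 /\
  (* (e) *) (maxs (F n) = v3 n /\ v3 n = v2 n + mex (D n.-1)) /\
  (* (f) *) maxs (D n) = v3 n - v1 n.
Proof.
case: n => [//|k] _ /=.
have Hk := Inv_all k.
have [Hk1 [ha [hb [hc [hd he]]]]] := step _ Hk.
case: Hk => [gD [gF _]].
case: Hk1 => [_ [_ [mF [mD _]]]].
split; first by [].
split; first by [].
split; first exact: gapP_ge.
split; first exact: gapP_ge.
by [].
Qed.
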